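(* Let $\chi:\mathcal H\to\mathcal H_L^\chi\otimes\mathcal H_R^\chi$ be a balanced splitting map such that $\mathcal A=\mathrm{stloc}_L(\chi)$ is a factor. Then there exist a canonical splitting map $\zeta:\mathcal H\to\mathcal H_L\otimes\mathcal H_R$ for $\mathcal A$, Hilbert spaces $\mathcal H_{M_L},\mathcal H_{M_R}$, a state $\phi\in\mathcal H_{M_L}\otimes\mathcal H_{M_R}$, and isometries $U_L:\mathcal H_L\otimes\mathcal H_{M_L}\to\mathcal H_L^\chi$ and $U_R:\mathcal H_{M_R}\otimes\mathcal H_R\to\mathcal H_R^\chi$ such that for all $x\in\mathcal H$, $\chi(x)=(U_L\otimes U_R)\big(\iota_\phi(\zeta(x))\big)$, where $\iota_\phi:\mathcal H_L\otimes\mathcal H_R\to\mathcal H_L\otimes\mathcal H_{M_L}\otimes\mathcal H_{M_R}\otimes\mathcal H_R$ is the linear map $a\otimes b\mapsto a\otimes\phi\otimes b$.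
   Context: All Hilbert spaces are finite-dimensional and complex. A splitting map on $\mathcal H$ is an isometry $\chi:\mathcal H\to\mathcal H_L^\chi\otimes\mathcal H_R^\chi$. $\mathrm{stloc}_L(\chi)$ is the set of $A\in\mathcal L(\mathcal H)$ for which there is $\tilde A\in\mathcal L(\mathcal H_L^\chi)$ with $A\chi^\dagger=\chi^\dagger(\tilde A\otimes\mathbb 1)$ and $\chi A=(\tilde A\otimes\mathbb 1)\chi$; $\mathrm{stloc}_R(\chi)$ is defined symmetrically on $\mathcal H_R^\chi$. $\chi$ is balanced if $\mathrm{stloc}_R(\chi)=\mathrm{stloc}_L(\chi)'$. A Von Neumann algebra $\mathcal A$ on $\mathcal H$ is a factor if $\mathcal A\cap\mathcal A'=\mathbb C\mathbb 1$. A representation unitary for a Von Neumann algebra $\mathcal A$ is a unitary $U:\mathcal H\to\bigoplus_i(\mathcal H_L^i\otimes\mathcal H_R^i)$ with $U\mathcal AU^\dagger=\bigoplus_i\mathcal L(\mathcal H_L^i)\otimes\mathbb 1_{\mathcal H_R^i}$; a canonical splitting map for $\mathcal A$ is the map $x\mapsto Ux$ followed by the natural inclusion $\bigoplus_i(\mathcal H_L^i\otimes\mathcal H_R^i)\hookrightarrow(\bigoplus_i\mathcal H_L^i)\otimes(\bigoplus_i\mathcal H_R^i)$, for some representation unitary $U$. *)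

(* Defs.v *)
(* Finite-dimensional complex Hilbert spaces are modelled as
   C^T for a finite type T (the index set of an orthonormal basis), with
   C := complex R for an arbitrary realType R (i.e. the complex numbers).
   Operators T2 -> T1 are kernels T1 -> T2 -> C (row index = codomain). *)
From HB Require Import structures.
From mathcomp Require Import all_boot all_order all_algebra.
From mathcomp Require Import reals complex.
Set Implicit Arguments. Unset Strict Implicit. Unset Printing Implicit Defensive.
Import Order.TTheory GRing.Theory Num.Theory.
Local Open Scope ring_scope.

Section HilbertOps.
Variable R : realType.
Definition C := complex R.

Definition vec (T : finType) := T -> C.
Definition op (T1 T2 : finType) := T1 -> T2 -> C.

Definition opapply (T1 T2 : finType) (A : op T1 T2) (x : vec T2) : vec T1 :=
  fun i => \sum_(j : T2) A i j * x j.
Definition opcomp (T1 T2 T3 : finType) (A : op T1 T2) (B : op T2 T3) : op T1 T3 :=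
  fun i k => \sum_(j : T2) A i j * B j k.
Definition opadj (T1 T2 : finType) (A : op T1 T2) : op T2 T1 :=
  fun j i => Num.conj (A i j).
Definition idop (T : finType) : op T T := fun i j => (i == j)%:R.
Arguments idop : clear implicits.
Definition scalop (T : finType) (c : C) : op T T := fun i j => c * (i == j)%:R.
Arguments scalop : clear implicits.
Definition optens (T1 T2 S1 S2 : finType) (A : op T1 S1) (B : op T2 S2)
  : op (T1 * T2)%type (S1 * S2)%type := fun i j => A i.1 j.1 * B i.2 j.2.

Definition is_isometry (T1 T2 : finType) (V : op T1 T2) : Prop :=
  opcomp (opadj V) V = idop T2.
Definition is_unitary (T1 T2 : finType) (V : op T1 T2) : Prop :=
  opcomp (opadj V) V = idop T2 /\ opcomp V (opadj V) = idop T1.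

Definition unit_vector (T : finType) (x : vec T) : Prop :=
  \sum_(i : T) Num.conj (x i) * x i = 1.

(* splitting maps chi : H -> H_L (x) H_R are isometries in op (HL*HR) H *)
Definition stlocL (H HL HR : finType) (chi : op (HL * HR)%type H) (A : op H H) : Prop :=
  exists At : op HL HL,
    opcomp A (opadj chi) = opcomp (opadj chi) (optens At (idop HR)) /\
    opcomp chi A = opcomp (optens At (idop HR)) chi.
Definition stlocR (H HL HR : finType) (chi : op (HL * HR)%type H) (A : op H H) : Prop :=
  exists At : op HR HR,
    opcomp A (opadj chi) = opcomp (opadj chi) (optens (idop HL) At) /\
    opcomp chi A = opcomp (optens (idop HL) At) chi.

Definition commutant (H : finType) (S : op H H -> Prop) (B : op H H) : Prop :=
  forall A, S A -> opcomp A B = opcomp B A.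

Definition balanced (H HL HR : finType) (chi : op (HL * HR)%type H) : Prop :=
  forall B, stlocR chi B <-> commutant (stlocL chi) B.

Definition vNalgebra (H : finType) (S : op H H -> Prop) : Prop :=
  (forall A, S A -> S (opadj A)) /\
  (forall A, S A <-> commutant (commutant S) A).

Definition is_factor (H : finType) (S : op H H -> Prop) : Prop :=
  vNalgebra S /\
  (forall Z, (S Z /\ commutant S Z) <-> exists c : C, Z = scalop H c).

(* direct sums  (+)_i (H_L^i (x) H_R^i)  as sigma types *)
Definition blockT (I : finType) (TL TR : I -> finType) (i : I) : finType :=
  (TL i * TR i)%type.
Definition dsum (I : finType) (TL TR : I -> finType) : finType :=
  {i : I & blockT TL TR i}.
Definition sumL (I : finType) (TL TR : I -> finType) (p : dsum TL TR)
  : {i : I & TL i} := Tagged TL (tagged p).1.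
Definition sumR (I : finType) (TL TR : I -> finType) (p : dsum TL TR)
  : {i : I & TR i} := Tagged TR (tagged p).2.

(* the operator  (+)_i (X_i (x) 1_{H_R^i}) ; the off-diagonal blocks of
   X : L((+)_i H_L^i) are irrelevant (killed by the delta on the R-part),
   so {blockop X | X} is exactly (+)_i L(H_L^i) (x) 1. *)
Definition blockop (I : finType) (TL TR : I -> finType)
  (X : op {i : I & TL i} {i : I & TL i}) : op (dsum TL TR) (dsum TL TR) :=
  fun p q => X (sumL p) (sumL q) * (sumR p == sumR q)%:R.

Definition rep_unitary (H : finType) (S : op H H -> Prop)
  (I : finType) (TL TR : I -> finType) (U : op (dsum TL TR) H) : Prop :=
  is_unitary U /\
  forall M, (exists A, S A /\ M = opcomp U (opcomp A (opadj U))) <->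
            (exists X, M = blockop X).

Definition dsum_incl (I : finType) (TL TR : I -> finType)
  : op ({i : I & TL i} * {i : I & TR i})%type (dsum TL TR) :=
  fun r p => (r == (sumL p, sumR p))%:R.

Definition canonical_splitting (H : finType) (S : op H H -> Prop)
  (I : finType) (TL TR : I -> finType)
  (zeta : op ({i : I & TL i} * {i : I & TR i})%type H) : Prop :=
  exists U : op (dsum TL TR) H, rep_unitary S U /\ zeta = opcomp (@dsum_incl I TL TR) U.

Definition iota_phi (HL HML HMR HR : finType) (phi : vec (HML * HMR)%type)
  : op ((HL * HML) * (HMR * HR))%type (HL * HR)%type :=
  fun r s => (r.1.1 == s.1)%:R * phi (r.1.2, r.2.1) * (r.2.2 == s.2)%:R.
End HilbertOps.

(* Main.v *)
Require Import Defs.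
From mathcomp Require Import all_boot all_order all_algebra.
From mathcomp Require Import reals complex.
From mathcomp Require spectral.
From Stdlib Require Import FunctionalExtensionality Classical.
From mathcomp Require Import ring.
Set Implicit Arguments. Unset Strict Implicit. Unset Printing Implicit Defensive.
Import Order.TTheory GRing.Theory Num.Theory.
Local Open Scope ring_scope.

Section Toolkit.
Variable R : realType.
Local Notation C := (C R).

Definition dot (T : finType) (x y : vec R T) : C := \sum_i Num.conj (x i) * y i.
Definition lc (T I : finType) (c : I -> C) (u : I -> vec R T) : vec R T :=
  fun t => \sum_i c i * u i t.
Definition orthon (T I : finType) (w : I -> vec R T) :=
  forall i j, dot (w i) (w j) = (i == j)%:R.
Definition subspace (T : finType) (P : vec R T -> Prop) :=
  P (fun _ => 0) /\ (forall x y, P x -> P y -> P (fun i => x i + y i)) /\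
  (forall c x, P x -> P (fun i => c * x i)).
Definition spans (T I : finType) (P : vec R T -> Prop) (w : I -> vec R T) :=
  (forall i, P (w i)) /\ forall x, P x -> x = lc (fun i => dot (w i) x) w.

Lemma dotC (T : finType) (x y : vec R T) : dot y x = Num.conj (dot x y).
Proof.
rewrite /dot rmorph_sum; apply: eq_bigr => i _.
by rewrite rmorphM /= conjCK mulrC.
Qed.

Lemma dot_ge0 (T : finType) (x : vec R T) : 0 <= dot x x.
Proof. by apply: sumr_ge0 => i _; rewrite -normCKC exprn_ge0. Qed.

Lemma dot_eq0 (T : finType) (x : vec R T) : dot x x = 0 -> x = (fun _ => 0).
Proof.
move=> h; apply: functional_extensionality => i.
have := psumr_eq0P (P := predT) (F := fun i => Num.conj (x i) * x i).
move=> /(_ (fun i _ => ltac:(rewrite -normCKC; exact: exprn_ge0))) /(_ h i isT).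
by rewrite -normCKC => /eqP; rewrite sqrf_eq0 normr_eq0 => /eqP.
Qed.

Lemma dot_lcr (T I : finType) (x : vec R T) (c : I -> C) u :
  dot x (lc c u) = \sum_i c i * dot x (u i).
Proof.
rewrite /dot /lc.
under eq_bigr do rewrite mulr_sumr.
rewrite exchange_big; apply: eq_bigr => i _; rewrite mulr_sumr.
by apply: eq_bigr => t _; rewrite mulrCA.
Qed.

Lemma dot_lcl (T I : finType) (y : vec R T) (c : I -> C) u :
  dot (lc c u) y = \sum_i Num.conj (c i) * dot (u i) y.
Proof.
rewrite dotC dot_lcr rmorph_sum; apply: eq_bigr => i _.
by rewrite rmorphM /= dotC conjCK.
Qed.

Lemma dot_addr (T : finType) (x y z : vec R T) :
  dot x (fun i => y i + z i) = dot x y + dot x z.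
Proof. by rewrite /dot -big_split; apply: eq_bigr => i _; rewrite mulrDr. Qed.

Lemma dot_scaler (T : finType) (x y : vec R T) c :
  dot x (fun i => c * y i) = c * dot x y.
Proof. by rewrite /dot mulr_sumr; apply: eq_bigr => i _; rewrite mulrCA. Qed.

Lemma dot_oppr (T : finType) (x y : vec R T) :
  dot x (fun i => - y i) = - dot x y.
Proof. by rewrite /dot -sumrN; apply: eq_bigr => i _; rewrite mulrN. Qed.

Lemma orthon_bound (T I : finType) (w : I -> vec R T) :
  orthon w -> (#|I| <= #|T|)%N.
Proof.
move=> ow.
pose M : 'M[C]_(#|I|, #|T|) := \matrix_(a, b) w (enum_val a) (enum_val b).
have uM : M \is spectral.unitarymx.
  apply/eqP/matrixP => a a'; rewrite !mxE.
  transitivity (dot (w (enum_val a')) (w (enum_val a))).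
    rewrite /dot (big_enum_val (A := T)) /=.
    apply: eq_bigr => b _; rewrite !mxE mulrC; congr (_ * _).
  by rewrite ow (inj_eq enum_val_inj) eq_sym.
by rewrite -(spectral.mxrank_unitary uM) rank_leq_col.
Qed.


Lemma dot_scalel (T : finType) (x y : vec R T) c :
  dot (fun i => c * x i) y = Num.conj c * dot x y.
Proof. by rewrite dotC dot_scaler rmorphM /= -dotC. Qed.

Lemma subspace_lc (T I : finType) (P : vec R T -> Prop) (c : I -> C) u :
  subspace P -> (forall i, P (u i)) -> P (lc c u).
Proof.
move=> [P0 [PD PZ]] Pu; rewrite /lc.
elim: (index_enum I) => [|i r IH].
  by have -> : (fun t : T => \sum_(i <- [::]) c i * u i t) = (fun _ => 0)
    by apply: functional_extensionality => t; rewrite big_nil.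
have -> : (fun t : T => \sum_(j <- i :: r) c j * u j t) =
          (fun t => (fun t => c i * u i t) t + (fun t => \sum_(j <- r) c j * u j t) t).
  by apply: functional_extensionality => t; rewrite big_cons.
by apply: PD => //; apply: PZ.
Qed.

Lemma ortho_ext (T : finType) (P : vec R T -> Prop) k (w : 'I_k -> vec R T) x :
  subspace P -> orthon w -> (forall i, P (w i)) -> P x ->
  x <> lc (fun i => dot (w i) x) w ->
  exists w' : 'I_k.+1 -> vec R T, orthon w' /\ forall i, P (w' i).
Proof.
move=> sP ow Pw Px nx.
pose y := fun t => x t + (-1) * lc (fun i => dot (w i) x) w t.
have Py : P y.
  have := subspace_lc (fun i => dot (w i) x) sP Pw.
  case: sP => [P0 [PD PZ]] hl; apply: PD => //.
  exact: (PZ (-1) _ hl).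
have oy : forall i, dot (w i) y = 0.
  move=> i; rewrite dot_addr dot_scaler dot_lcr.
  rewrite (bigD1 i) //= ow eqxx mulr1 big1 ?addr0 ?mulN1r ?subrr //.
  by move=> j /negPf nji; rewrite ow eq_sym nji mulr0.
have ny : dot y y != 0.
  apply/eqP => /dot_eq0 y0; apply: nx; apply: functional_extensionality => t.
  have := congr1 (fun f => f t) y0; rewrite /y /= mulN1r => /eqP.
  by rewrite subr_eq0 => /eqP.
pose c := (sqrtC (dot y y))^-1.
have c_ge0 : 0 <= c by rewrite invr_ge0 sqrtC_ge0 dot_ge0.
pose z := fun t => c * y t.
have Pz : P z by case: sP => [_ [_ PZ]]; exact: PZ.
have zz : dot z z = 1.
  rewrite dot_scalel dot_scaler (geC0_conj c_ge0) mulrA -expr2 /c exprVn sqrtCK.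
  by rewrite mulVf.
have wz : forall i, dot (w i) z = 0 by move=> i; rewrite dot_scaler oy mulr0.
exists (fun i => oapp w z (unlift ord0 i)); split; last first.
  by move=> i; case: (unlift ord0 i) => [j|] /=.
move=> i j.
case: (unliftP ord0 i) => [a ->|->]; case: (unliftP ord0 j) => [b ->|->] /=.
- by rewrite ow (inj_eq lift_inj).
- by rewrite wz.
- by rewrite dotC wz rmorph0.
- by rewrite zz.
Qed.

Lemma onb_exists (T : finType) (P : vec R T -> Prop) :
  subspace P -> exists k (w : 'I_k -> vec R T), orthon w /\ spans P w.
Proof.
move=> sP.
suff: forall n k (w : 'I_k -> vec R T), orthon w -> (forall i, P (w i)) ->
   (#|T| - k <= n)%N -> exists k (w : 'I_k -> vec R T), orthon w /\ spans P w.
  move=> /(_ #|T| 0 (fun (i : 'I_0) (_ : T) => 0)); apply.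
  - by case.
  - by case.
  by rewrite subn0.
elim=> [|n IH] k w ow Pw hk.
  case: (classic (forall x, P x -> x = lc (fun i => dot (w i) x) w)) => hs.
    by exists k, w.
  move: hs => /not_all_ex_not [x hx]; have [Px nx] := imply_to_and _ _ hx.
  have [w' [ow' _]] := ortho_ext sP ow Pw Px nx.
  have := orthon_bound ow'; rewrite card_ord => hb.
  by move: hk; rewrite leqn0 subn_eq0 leqNgt hb.
case: (classic (forall x, P x -> x = lc (fun i => dot (w i) x) w)) => hs.
  by exists k, w.
move: hs => /not_all_ex_not [x hx]; have [Px nx] := imply_to_and _ _ hx.
have [w' [ow' Pw']] := ortho_ext sP ow Pw Px nx.
by apply: (IH _ w') => //; rewrite subnS -subn1 leq_subLR add1n.
Qed.


Lemma dot_coef (T I : finType) (u : I -> vec R T) x y :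
  x = lc (fun i => dot (u i) x) u ->
  dot x y = dot (fun i => dot (u i) x) (fun i => dot (u i) y).
Proof. by move=> ex; rewrite {1}ex dot_lcl. Qed.

Lemma onb_maximal (T I : finType) (P : vec R T -> Prop) (u : I -> vec R T)
   k (w : 'I_k -> vec R T) :
  subspace P -> orthon u -> spans P u -> orthon w ->
  (forall j, P (w j)) -> (#|I| <= k)%N -> spans P w.
Proof.
move=> sP ou [Pu su] ow Pw hk; split => // x Px.
case: (classic (x = lc (fun i => dot (w i) x) w)) => // nx.
have [w' [ow' Pw']] := ortho_ext sP ow Pw Px nx.
have oc : orthon (fun j => fun i => dot (u i) (w' j)).
  by move=> i j; rewrite -ow' -dot_coef //; apply: su.
have := orthon_bound oc; rewrite card_ord => h.
by have := leq_trans h hk; rewrite ltnn.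
Qed.

End Toolkit.

Section Ops.
Variable R : realType.
Local Notation C := (C R).

Definition std (T : finType) (t : T) : vec R T := fun s => (s == t)%:R.
Definition opscale (T1 T2 : finType) (c : C) (A : op R T1 T2) : op R T1 T2 :=
  fun i j => c * A i j.
Definition opadd (T1 T2 : finType) (A B : op R T1 T2) : op R T1 T2 :=
  fun i j => A i j + B i j.
Definition opsum (T1 T2 I : finType) (F : I -> op R T1 T2) : op R T1 T2 :=
  fun i j => \sum_k F k i j.

Lemma opapply_std (T1 T2 : finType) (A : op R T1 T2) j :
  opapply A (std j) = fun i => A i j.
Proof.
apply: functional_extensionality => i; rewrite /opapply /std (bigD1 j) //= eqxx mulr1.
by rewrite big1 ?addr0 // => k /negPf ->; rewrite mulr0.
Qed.

Lemma op_ext (T1 T2 : finType) (A B : op R T1 T2) :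
  (forall x, opapply A x = opapply B x) -> A = B.
Proof.
move=> h; apply: functional_extensionality => i; apply: functional_extensionality => j.
by have := congr1 (fun f => f i) (h (std j)); rewrite !opapply_std.
Qed.

Lemma opapply_comp (T1 T2 T3 : finType) (A : op R T1 T2) (B : op R T2 T3) x :
  opapply (opcomp A B) x = opapply A (opapply B x).
Proof.
apply: functional_extensionality => i; rewrite /opapply /opcomp.
under eq_bigr do rewrite mulr_suml.
rewrite exchange_big; apply: eq_bigr => j _; rewrite mulr_sumr.
by apply: eq_bigr => k _; rewrite mulrA.
Qed.

Lemma opcompA (T1 T2 T3 T4 : finType) (A : op R T1 T2) (B : op R T2 T3) (D : op R T3 T4) :
  opcomp (opcomp A B) D = opcomp A (opcomp B D).
Proof. by apply: op_ext => x; rewrite !opapply_comp. Qed.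

Lemma opadjK (T1 T2 : finType) (A : op R T1 T2) : opadj (opadj A) = A.
Proof.
apply: functional_extensionality => i; apply: functional_extensionality => j.
by rewrite /opadj conjCK.
Qed.

Lemma opadj_comp (T1 T2 T3 : finType) (A : op R T1 T2) (B : op R T2 T3) :
  opadj (opcomp A B) = opcomp (opadj B) (opadj A).
Proof.
apply: functional_extensionality => i; apply: functional_extensionality => j.
rewrite /opadj /opcomp rmorph_sum; apply: eq_bigr => k _.
by rewrite rmorphM /= mulrC.
Qed.

Lemma dot_adj (T1 T2 : finType) (A : op R T1 T2) x y :
  dot (opapply A x) y = dot x (opapply (opadj A) y).
Proof.
rewrite /dot /opapply /opadj.
under eq_bigr do rewrite rmorph_sum /= mulr_suml.
under [RHS]eq_bigr do rewrite mulr_sumr.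
rewrite exchange_big; apply: eq_bigr => j _; apply: eq_bigr => i _.
by rewrite rmorphM /= mulrCA mulrA.
Qed.

Lemma opapply_id (T : finType) (x : vec R T) : opapply (@idop R T) x = x.
Proof.
apply: functional_extensionality => i; rewrite /opapply /idop (bigD1 i) //= eqxx mul1r.
by rewrite big1 ?addr0 // => k; rewrite eq_sym => /negPf ->; rewrite mul0r.
Qed.

Lemma opcomp1l (T1 T2 : finType) (A : op R T1 T2) : opcomp (@idop R T1) A = A.
Proof. by apply: op_ext => x; rewrite opapply_comp opapply_id. Qed.

Lemma opcomp1r (T1 T2 : finType) (A : op R T1 T2) : opcomp A (@idop R T2) = A.
Proof. by apply: op_ext => x; rewrite opapply_comp opapply_id. Qed.

Lemma opadj_id (T : finType) : opadj (@idop R T) = @idop R T.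
Proof.
apply: functional_extensionality => i; apply: functional_extensionality => j.
by rewrite /opadj /idop conjC_nat eq_sym.
Qed.

Lemma opapply_scale (T1 T2 : finType) c (A : op R T1 T2) x :
  opapply (opscale c A) x = fun i => c * opapply A x i.
Proof.
apply: functional_extensionality => i; rewrite /opapply /opscale mulr_sumr.
by apply: eq_bigr => j _; rewrite mulrA.
Qed.

Lemma opapply_add (T1 T2 : finType) (A B : op R T1 T2) x :
  opapply (opadd A B) x = fun i => opapply A x i + opapply B x i.
Proof.
apply: functional_extensionality => i; rewrite /opapply /opadd -big_split.
by apply: eq_bigr => j _; rewrite mulrDl.
Qed.

Lemma opapply_sum (T1 T2 I : finType) (F : I -> op R T1 T2) x :
  opapply (opsum F) x = fun i => \sum_k opapply (F k) x i.
Proof.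
apply: functional_extensionality => i; rewrite /opapply /opsum exchange_big.
by apply: eq_bigr => j _; rewrite mulr_suml.
Qed.

Lemma opapply_lc (T1 T2 I : finType) (A : op R T1 T2) (c : I -> C) u :
  opapply A (lc c u) = lc c (fun i => opapply A (u i)).
Proof.
apply: functional_extensionality => i; rewrite /opapply /lc.
under eq_bigr do rewrite mulr_sumr.
rewrite exchange_big; apply: eq_bigr => k _; rewrite mulr_sumr.
by apply: eq_bigr => j _; rewrite mulrCA.
Qed.

Lemma opapply_addv (T1 T2 : finType) (A : op R T1 T2) x y :
  opapply A (fun i => x i + y i) = fun i => opapply A x i + opapply A y i.
Proof.
apply: functional_extensionality => i; rewrite /opapply -big_split.
by apply: eq_bigr => j _; rewrite mulrDr.
Qed.

Lemma opapply_scalev (T1 T2 : finType) (A : op R T1 T2) c x :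
  opapply A (fun i => c * x i) = fun i => c * opapply A x i.
Proof.
apply: functional_extensionality => i; rewrite /opapply mulr_sumr.
by apply: eq_bigr => j _; rewrite mulrCA.
Qed.

Lemma opcomp_scalel (T1 T2 T3 : finType) c (A : op R T1 T2) (B : op R T2 T3) :
  opcomp (opscale c A) B = opscale c (opcomp A B).
Proof. by apply: op_ext => x; rewrite opapply_comp !opapply_scale opapply_comp. Qed.

Lemma opcomp_scaler (T1 T2 T3 : finType) c (A : op R T1 T2) (B : op R T2 T3) :
  opcomp A (opscale c B) = opscale c (opcomp A B).
Proof.
by apply: op_ext => x; rewrite opapply_comp !opapply_scale opapply_comp opapply_scalev.
Qed.

Lemma opcomp_addl (T1 T2 T3 : finType) (A A' : op R T1 T2) (B : op R T2 T3) :
  opcomp (opadd A A') B = opadd (opcomp A B) (opcomp A' B).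
Proof. by apply: op_ext => x; rewrite opapply_comp !opapply_add !opapply_comp. Qed.

Lemma opcomp_addr (T1 T2 T3 : finType) (A : op R T1 T2) (B B' : op R T2 T3) :
  opcomp A (opadd B B') = opadd (opcomp A B) (opcomp A B').
Proof.
by apply: op_ext => x; rewrite opapply_comp !opapply_add !opapply_comp opapply_addv.
Qed.

Lemma opcomp_suml (T1 T2 T3 I : finType) (F : I -> op R T1 T2) (B : op R T2 T3) :
  opcomp (opsum F) B = opsum (fun k => opcomp (F k) B).
Proof.
apply: op_ext => x; rewrite opapply_comp !opapply_sum.
apply: functional_extensionality => i; apply: eq_bigr => k _.
by rewrite opapply_comp.
Qed.

Lemma opapply_sumv (T1 T2 I : finType) (A : op R T1 T2) (F : I -> vec R T2) :
  opapply A (fun t => \sum_k F k t) = fun i => \sum_k opapply A (F k) i.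
Proof.
apply: functional_extensionality => i; rewrite /opapply.
under eq_bigr do rewrite mulr_sumr.
by rewrite exchange_big.
Qed.

Lemma opcomp_sumr (T1 T2 T3 I : finType) (A : op R T1 T2) (F : I -> op R T2 T3) :
  opcomp A (opsum F) = opsum (fun k => opcomp A (F k)).
Proof.
apply: op_ext => x; rewrite opapply_comp !opapply_sum opapply_sumv.
apply: functional_extensionality => i; apply: eq_bigr => k _.
by rewrite opapply_comp.
Qed.

Lemma opadj_scale (T1 T2 : finType) c (A : op R T1 T2) :
  opadj (opscale c A) = opscale (Num.conj c) (opadj A).
Proof.
apply: functional_extensionality => i; apply: functional_extensionality => j.
by rewrite /opadj /opscale rmorphM.
Qed.

Lemma opadj_add (T1 T2 : finType) (A B : op R T1 T2) :
  opadj (opadd A B) = opadd (opadj A) (opadj B).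
Proof.
apply: functional_extensionality => i; apply: functional_extensionality => j.
by rewrite /opadj /opadd rmorphD.
Qed.

Lemma opadj_sum (T1 T2 I : finType) (F : I -> op R T1 T2) :
  opadj (opsum F) = opsum (fun k => opadj (F k)).
Proof.
apply: functional_extensionality => i; apply: functional_extensionality => j.
by rewrite /opadj /opsum rmorph_sum.
Qed.

End Ops.
Arguments std {R T} t.

Section Comm.
Variable R : realType.
Local Notation C := (C R).

Lemma proj_sig (T I : finType) (u : I -> vec R T) :
  {P : op R T T | P = fun s t => \sum_i u i s * Num.conj (u i t)}.
Proof. by exists (fun s t => \sum_i u i s * Num.conj (u i t)). Qed.
Definition proj (T I : finType) (u : I -> vec R T) : op R T T := sval (proj_sig u).
Lemma projE (T I : finType) (u : I -> vec R T) :
  proj u = fun s t => \sum_i u i s * Num.conj (u i t).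
Proof. by rewrite /proj; case: (proj_sig u). Qed.

Lemma opapply_proj (T I : finType) (u : I -> vec R T) x :
  opapply (proj u) x = lc (fun i => dot (u i) x) u.
Proof.
apply: functional_extensionality => s; rewrite /opapply projE /lc /dot.
under eq_bigr do rewrite mulr_suml.
rewrite exchange_big; apply: eq_bigr => i _; rewrite mulr_suml.
by apply: eq_bigr => t _; rewrite -mulrA mulrC.
Qed.


Lemma proj_adj (T I : finType) (u : I -> vec R T) : opadj (proj u) = proj u.
Proof.
rewrite projE; apply: functional_extensionality => i; apply: functional_extensionality => j.
rewrite /opadj rmorph_sum; apply: eq_bigr => r _.
by rewrite rmorphM /= conjCK mulrC.
Qed.

Lemma opsum_exchange (T1 T2 I J : finType) (F : I -> J -> op R T1 T2) :
  opsum (fun i => opsum (fun j => F i j)) = opsum (fun j => opsum (fun i => F i j)).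
Proof.
apply: functional_extensionality => s; apply: functional_extensionality => t.
by rewrite /opsum exchange_big.
Qed.

Lemma opsum_ext (T1 T2 I : finType) (F G : I -> op R T1 T2) :
  (forall i, F i = G i) -> opsum F = opsum G.
Proof. by move=> h; congr opsum; apply: functional_extensionality. Qed.

Lemma proj_commute (T I : finType) (S : vec R T -> Prop) (u : I -> vec R T) (y : op R T T) :
  orthon u -> spans S u ->
  (forall v, S v -> S (opapply y v)) -> (forall v, S v -> S (opapply (opadj y) v)) ->
  opcomp y (proj u) = opcomp (proj u) y.
Proof.
move=> ou [Su su] yS yaS; apply: op_ext => x.
rewrite (opapply_comp y) (opapply_comp (proj u)) !opapply_proj opapply_lc.
apply: functional_extensionality => t; rewrite /lc.
have e1 : forall i, opapply y (u i) = lc (fun j => dot (u j) (opapply y (u i))) u.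
  by move=> i; apply: su; apply: yS.
under eq_bigr do rewrite e1 /lc mulr_sumr.
rewrite exchange_big; apply: eq_bigr => j _.
rewrite -(opadjK y) -dot_adj.
rewrite (su _ (yaS _ (Su j))) dot_lcl mulr_suml; apply: eq_bigr => i _.
rewrite -dotC dot_adj opadjK; ring.
Qed.

Lemma proj_fix (T I : finType) (S : vec R T -> Prop) (u : I -> vec R T) x :
  spans S u -> S x -> opapply (proj u) x = x.
Proof. by move=> [_ su] Sx; rewrite opapply_proj -su. Qed.

Lemma proj_in (T I : finType) (S : vec R T -> Prop) (u : I -> vec R T) x :
  subspace S -> spans S u -> S (opapply (proj u) x).
Proof. by move=> sS [Su _]; rewrite opapply_proj; apply: subspace_lc. Qed.

Section CommS.
Variable (T : finType) (S : op R T T -> Prop).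

Lemma comm_id : commutant S (@idop R T).
Proof. by move=> a _; rewrite opcomp1l opcomp1r. Qed.

Lemma comm_comp x y : commutant S x -> commutant S y -> commutant S (opcomp x y).
Proof. by move=> hx hy a Sa; rewrite -opcompA hx // !opcompA hy. Qed.

Lemma comm_add x y : commutant S x -> commutant S y -> commutant S (opadd x y).
Proof. by move=> hx hy a Sa; rewrite opcomp_addl opcomp_addr hx // hy. Qed.

Lemma comm_scale c x : commutant S x -> commutant S (opscale c x).
Proof. by move=> hx a Sa; rewrite opcomp_scalel opcomp_scaler hx. Qed.

Lemma comm_sum (I : finType) (F : I -> op R T T) :
  (forall i, commutant S (F i)) -> commutant S (opsum F).
Proof.
move=> hF a Sa; rewrite opcomp_suml opcomp_sumr; congr opsum.
by apply: functional_extensionality => i; rewrite hF.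
Qed.

Lemma comm_adj x : (forall a, S a -> S (opadj a)) -> commutant S x -> commutant S (opadj x).
Proof.
move=> Sadj hx a Sa.
by rewrite -[a]opadjK -!opadj_comp hx //; apply: Sadj.
Qed.
End CommS.

End Comm.

Section Factor.
Variable R : realType.
Local Notation C := (C R).
Variables (H : finType) (A : op R H H -> Prop).
Hypothesis Aadj : forall a, A a -> A (opadj a).
Hypothesis Abic : forall a, A a <-> commutant (commutant A) a.
Hypothesis Acent : forall Z, (A Z /\ commutant A Z) <-> exists c, Z = @scalop R H c.

Lemma A_id : A (@idop R H).
Proof. by apply/Abic; apply: comm_id. Qed.
Lemma A_comp x y : A x -> A y -> A (opcomp x y).
Proof. by move=> /Abic hx /Abic hy; apply/Abic; apply: comm_comp. Qed.
Lemma A_add x y : A x -> A y -> A (opadd x y).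
Proof. by move=> /Abic hx /Abic hy; apply/Abic; apply: comm_add. Qed.
Lemma A_scale c x : A x -> A (opscale c x).
Proof. by move=> /Abic hx; apply/Abic; apply: comm_scale. Qed.
Lemma A_sum (I : finType) (F : I -> op R H H) : (forall i, A (F i)) -> A (opsum F).
Proof. by move=> hF; apply/Abic; apply: comm_sum => i; apply/Abic. Qed.
Lemma Ac_adj y : commutant A y -> commutant A (opadj y).
Proof. exact: comm_adj. Qed.

Lemma opapply0 (T1 T2 : finType) (M : op R T1 T2) : opapply M (fun _ => 0) = (fun _ => 0).
Proof.
by apply: functional_extensionality => i; rewrite /opapply big1 // => j _; rewrite mulr0.
Qed.

Definition Inv (S : vec R H -> Prop) :=
  subspace S /\ (forall y, commutant A y -> forall v, S v -> S (opapply y v)) /\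
  (exists v, S v /\ v <> (fun _ => 0)).

Definition minimal_inv S k (u : 'I_k -> vec R H) :=
  Inv S /\ orthon u /\ spans S u /\
  forall S' k' (u' : 'I_k' -> vec R H), Inv S' -> orthon u' -> spans S' u' -> (k <= k')%N.

Lemma min_inv (h0 : H) : exists S k u, @minimal_inv S k u.
Proof.
have sT : subspace (fun _ : vec R H => True) by [].
have [k0 [u0 [ou0 su0]]] := onb_exists sT.
suff: forall k, (exists S (u : 'I_k -> vec R H), Inv S /\ orthon u /\ spans S u) ->
         exists S k u, @minimal_inv S k u.
  apply; exists (fun _ => True), u0; split=> //; split=> //; split=> //.
  exists (std h0); split=> // /(congr1 (fun f => f h0)) /eqP.
  by rewrite /std eqxx oner_eq0.
elim/ltn_ind => k IH [S [u [iS [ou su]]]].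
case: (classic (exists S' k' (u' : 'I_k' -> vec R H),
   Inv S' /\ orthon u' /\ spans S' u' /\ (k' < k)%N)).
  move=> [S' [k' [u' [iS' [ou' [su' lt]]]]]].
  by apply: (IH k' lt); exists S', u'.
move=> hn; exists S, k, u; split=> //; split=> //; split=> // S' k' u' iS' ou' su'.
rewrite leqNgt; apply/negP => lt; apply: hn.
by exists S', k', u'.
Qed.

Section MinS.
Variables (S : vec R H -> Prop) (k : nat) (u : 'I_k -> vec R H).
Hypothesis mS : minimal_inv S u.

Let iS : Inv S. Proof. by case: mS. Qed.
Let sS : subspace S. Proof. by case: iS. Qed.
Let ou : orthon u. Proof. by case: mS => _ []. Qed.
Let su : spans S u. Proof. by case: mS => _ [_ []]. Qed.
Let minS := (let: conj _ (conj _ (conj _ m)) := mS in m).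

Definition e := proj u.

Lemma e_in_A : A e.
Proof.
apply/Abic => y hy.
have [_ [yS _]] := iS.
apply: (proj_commute ou su); first exact: yS.
by apply: yS; apply: Ac_adj.
Qed.

Lemma k_gt0 : (0 < k)%N.
Proof.
case: iS => _ [_ [v [Sv nv]]]; rewrite lt0n; apply/eqP => k0.
apply: nv; rewrite (proj2 su _ Sv); apply: functional_extensionality => t.
by rewrite /lc big1 // => i; have := ltn_ord i; rewrite {2}k0.
Qed.

Lemma e_fix x : S x -> opapply e x = x.
Proof. exact: proj_fix su. Qed.
Lemma e_in x : S (opapply e x).
Proof. exact: proj_in sS su. Qed.

Lemma eAe a : A a -> exists l, opcomp e (opcomp a e) = opscale l e.
Proof.
move=> Aa.
pose h := opcomp e (opcomp a e).
have Ah : A h by apply: A_comp; [exact: e_in_A | apply: A_comp => //; exact: e_in_A].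
pose X : 'M[C]_k := \matrix_(r, s) dot (u s) (opapply h (u r)).
have [l /eigenvalueP [c cX c0]] := spectral.eigenvalue_closed X k_gt0.
pose v := lc (fun r => c 0 r) u.
have dv : forall s, dot (u s) v = c 0 s.
  move=> s; rewrite dot_lcr (bigD1 s) //= ou eqxx mulr1 big1 ?addr0 // => j /negPf.
  by rewrite ou eq_sym => ->; rewrite mulr0.
have Sv : S v by apply: subspace_lc => //; case: su.
have hSv : S (opapply h v) by rewrite /h opapply_comp; apply: e_in.
have hv : opapply h v = fun t => l * v t.
  rewrite (proj2 su _ hSv); apply: functional_extensionality => t.
  rewrite /lc /v mulr_sumr; apply: eq_bigr => s _.
  rewrite mulrA; congr (_ * _).
  have := congr1 (fun M : 'rV[C]_k => M 0 s) cX; rewrite !mxE => <-.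
  rewrite opapply_lc dot_lcr; apply: eq_bigr => r _.
  by rewrite mxE.
pose E := fun w => S w /\ opapply h w = (fun t => l * w t).
have sE : subspace E.
  case: sS => [S0 [SD SZ]]; split; [|split].
  - split => //; rewrite opapply0; apply: functional_extensionality => t; by rewrite mulr0.
  - move=> x y [Sx hx] [Sy hy]; split; first exact: SD.
    rewrite opapply_addv hx hy; apply: functional_extensionality => t; by rewrite mulrDr.
  - move=> c1 x [Sx hx]; split; first exact: SZ.
    rewrite opapply_scalev hx; apply: functional_extensionality => t; by rewrite mulrCA.
have iE : Inv E.
  split => //; split.
    move=> y hy w [Sw hw]; split; first by case: iS => _ [yS _]; apply: yS.
    by rewrite -opapply_comp (hy _ Ah) opapply_comp hw opapply_scalev.
  exists v; split; first by split.
  move=> v0.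
  have [s cs] : exists s, c 0 s != 0.
    apply/existsP; apply: contraR c0 => /existsPn hc.
    by apply/eqP/rowP => s; rewrite mxE; apply/eqP; apply: negbNE (hc s).
  move: cs; rewrite -dv v0 /dot big1 ?eqxx // => t _; by rewrite mulr0.
have [k' [w [ow sw]]] := onb_exists sE.
have kk' := minS iE ow sw.
have swS : spans S w.
  apply: (onb_maximal sS ou su ow) => //; last by rewrite card_ord.
  by move=> j; case: sw => /(_ j) [].
have hS : forall x, S x -> opapply h x = fun t => l * x t.
  move=> x Sx; have : E x.
    by rewrite (proj2 swS _ Sx); apply: subspace_lc => //; case: sw.
  by case.
exists l; apply: op_ext => z.
rewrite opapply_scale.
have -> : opapply h z = opapply h (opapply e z).
  by rewrite /h !opapply_comp (e_fix (e_in z)).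
by rewrite hS //; apply: e_in.
Qed.


Lemma e_adj : opadj e = e.
Proof. exact: proj_adj. Qed.

Lemma ee : opcomp e e = e.
Proof. by apply: op_ext => x; rewrite opapply_comp e_fix //; apply: e_in. Qed.

Definition r0 : 'I_k := Ordinal k_gt0.
Definition xi := u r0.

Lemma xi_S : S xi.
Proof. by case: su => Su _; apply: Su. Qed.
Lemma exi : opapply e xi = xi.
Proof. exact: e_fix xi_S. Qed.
Lemma xixi : dot xi xi = 1.
Proof. by rewrite /xi ou eqxx. Qed.

Lemma lam_e a : A a -> opcomp e (opcomp a e) = opscale (dot xi (opapply a xi)) e.
Proof.
move=> Aa; have [l hl] := eAe Aa; rewrite hl; congr opscale.
have := congr1 (fun M => dot xi (opapply M xi)) hl => /=.
rewrite opapply_scale dot_scaler exi xixi mulr1 => <-.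
by rewrite !opapply_comp exi -{1}e_adj -dot_adj exi.
Qed.

Definition Axi := fun x => exists a, A a /\ x = opapply a xi.

Lemma sAxi : subspace Axi.
Proof.
split; [|split].
- exists (opscale 0 (@idop R H)); split; first by apply: A_scale; exact: A_id.
  by rewrite opapply_scale; apply: functional_extensionality => t; rewrite mul0r.
- move=> x y [a [Aa ->]] [b [Ab ->]]; exists (opadd a b); split; first exact: A_add.
  by rewrite opapply_add.
- move=> c x [a [Aa ->]]; exists (opscale c a); split; first exact: A_scale.
  by rewrite opapply_scale.
Qed.


Section Basis.
Variables (n : nat) (w : 'I_n -> vec R H) (aa : 'I_n -> op R H H).
Hypotheses (ow : orthon w) (sw : spans Axi w) (Aaa : forall i, A (aa i))
  (waa : forall i, w i = opapply (aa i) xi).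

Definition v i := opcomp (aa i) e.

Lemma Av i : A (v i).
Proof. by apply: A_comp => //; exact: e_in_A. Qed.

Lemma vxi i : opapply (v i) xi = w i.
Proof. by rewrite /v opapply_comp exi waa. Qed.

Lemma ve i : opcomp (v i) e = v i.
Proof. by rewrite /v opcompA ee. Qed.

Lemma F1 i j : opcomp (opadj (v i)) (v j) = opscale (i == j)%:R e.
Proof.
have -> : opcomp (opadj (v i)) (v j) = opcomp e (opcomp (opcomp (opadj (aa i)) (aa j)) e).
  by rewrite /v opadj_comp e_adj !opcompA.
rewrite lam_e; last by apply: A_comp => //; apply: Aadj.
by rewrite opapply_comp -dot_adj -!waa ow.
Qed.

Lemma opapply_minus (T1 T2 : finType) (M N : op R T1 T2) x :
  opapply (opadd M (opscale (-1) N)) x = fun t => opapply M x t - opapply N x t.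
Proof.
rewrite opapply_add opapply_scale; apply: functional_extensionality => t.
by rewrite mulN1r.
Qed.

Lemma F2 a i : A a ->
  opcomp a (v i) = opsum (fun j => opscale (dot (w j) (opapply a (w i))) (v j)).
Proof.
move=> Aa.
set G := opsum _.
pose D := opadd (opcomp a (v i)) (opscale (-1) G).
have AD : A D.
  apply: A_add; first by apply: A_comp => //; exact: Av.
  apply: A_scale; apply: A_sum => j; apply: A_scale; exact: Av.
have DE : opcomp D e = D.
  rewrite /D opcomp_addl opcomp_scalel /G opcomp_suml opcompA ve.
  congr (opadd _ (opscale _ _)); apply: opsum_ext => j.
  by rewrite opcomp_scalel ve.
have Dxi : opapply D xi = fun _ => 0.
  rewrite /D opapply_minus opapply_comp vxi /G opapply_sum.
  have Aw : Axi (opapply a (w i)).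
    by exists (opcomp a (aa i)); split; [apply: A_comp | rewrite opapply_comp waa].
  rewrite {1}(proj2 sw _ Aw); apply: functional_extensionality => t.
  apply/eqP; rewrite /lc subr_eq0; apply/eqP; apply: eq_bigr => j _.
  by rewrite opapply_scale vxi.
have DD : opcomp e (opcomp (opcomp (opadj D) D) e) = opscale 0 e.
  rewrite lam_e; last by apply: A_comp => //; apply: Aadj.
  by rewrite opapply_comp Dxi opapply0 /dot big1 // => t _; rewrite mulr0.
have D0 : forall x, opapply D x = fun _ => 0.
  move=> x; apply: dot_eq0.
  rewrite -DE opapply_comp dot_adj -opapply_comp -{1}e_adj dot_adj opadjK.
  rewrite -!opapply_comp opcompA DD opapply_scale.
  by rewrite /dot big1 // => t _; rewrite mul0r mulr0.
apply: op_ext => x; have := D0 x; rewrite /D opapply_minus.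
move=> h; apply: functional_extensionality => t.
by have := congr1 (fun f => f t) h => /= /eqP; rewrite subr_eq0 => /eqP.
Qed.


Definition Q := opsum (fun i => opcomp (v i) (opadj (v i))).

Lemma AQ : A Q.
Proof. by apply: A_sum => i; apply: A_comp; [exact: Av | apply: Aadj; exact: Av]. Qed.

Lemma Q_comm a : A a -> opcomp a Q = opcomp Q a.
Proof.
move=> Aa; rewrite /Q opcomp_sumr opcomp_suml.
have -> : (fun i => opcomp a (opcomp (v i) (opadj (v i)))) =
   (fun i => opsum (fun j => opscale (dot (w j) (opapply a (w i))) (opcomp (v j) (opadj (v i))))).
  apply: functional_extensionality => i; rewrite -opcompA F2 // opcomp_suml.
  by apply: opsum_ext => j; rewrite opcomp_scalel.
have -> : (fun i => opcomp (opcomp (v i) (opadj (v i))) a) =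
   (fun i => opsum (fun j => opscale (Num.conj (dot (w j) (opapply (opadj a) (w i))))
                                      (opcomp (v i) (opadj (v j))))).
  apply: functional_extensionality => i.
  rewrite opcompA -[a in opcomp (opadj (v i)) a]opadjK -opadj_comp F2; last exact: Aadj.
  rewrite opadj_sum opcomp_sumr; apply: opsum_ext => j.
  by rewrite opadj_scale opcomp_scaler.
rewrite opsum_exchange; apply: opsum_ext => i; apply: opsum_ext => j.
congr opscale.
by rewrite -dotC dot_adj opadjK.
Qed.

Lemma w_ne0 i : w i <> (fun _ => 0).
Proof.
move=> h; have := ow i i; rewrite eqxx h /dot.
have -> : \sum_(t : H) Num.conj (0 : C) * 0 = 0 by rewrite big1 // => t _; rewrite mulr0.
by move/eqP; rewrite eq_sym oner_eq0.
Qed.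

Lemma n_gt0 : (0 < n)%N.
Proof.
rewrite lt0n; apply/eqP => n0.
have Ax : Axi xi by exists (@idop R H); split; [exact: A_id | rewrite opapply_id].
have l0 : forall c, lc c w = (fun _ => 0).
  move=> c; apply: functional_extensionality => t; rewrite /lc big1 // => i.
  by have := ltn_ord i; rewrite {2}n0.
have := xixi; rewrite {2}(proj2 sw _ Ax) l0 /dot.
have -> : \sum_(t : H) Num.conj (xi t) * 0 = 0 by rewrite big1 // => t _; rewrite mulr0.
by move/eqP; rewrite eq_sym oner_eq0.
Qed.

Lemma vv_xi i j : opapply (opadj (v i)) (w j) = fun t => (i == j)%:R * xi t.
Proof. by rewrite -vxi -opapply_comp F1 opapply_scale exi. Qed.

Lemma Q_id : Q = @idop R H.
Proof.
have [c Qc] : exists c, Q = @scalop R H c.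
  by apply/Acent; split; [exact: AQ | move=> a Aa; rewrite Q_comm].
pose i0 : 'I_n := Ordinal n_gt0.
have Qw : opapply Q (w i0) = w i0.
  rewrite /Q opapply_sum; apply: functional_extensionality => t.
  rewrite (bigD1 i0) //= big1 ?addr0.
    by rewrite opapply_comp vv_xi eqxx opapply_scalev vxi mul1r.
  by move=> i ni; rewrite opapply_comp vv_xi (negPf ni) opapply_scalev mul0r.
have c1 : c = 1.
  have : opapply Q (w i0) = fun t => c * w i0 t.
    rewrite Qc; apply: functional_extensionality => t.
    rewrite /opapply /scalop (bigD1 t) //= eqxx mulr1 big1 ?addr0 // => s /negPf.
    by rewrite eq_sym => ->; rewrite mulr0 mul0r.
  rewrite Qw => /(congr1 (fun x => dot (w i0) x)).
  by rewrite dot_scaler ow eqxx mulr1.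
rewrite Qc c1; apply: functional_extensionality => s; apply: functional_extensionality => t.
by rewrite /scalop mul1r.
Qed.


Definition TL := fun _ : unit => ('I_n : finType).
Definition TR := fun _ : unit => ('I_k : finType).
Definition Dt := dsum TL TR.
Definition emb (x : 'I_n * 'I_k) : Dt := existT (fun i => blockT TL TR i) tt x.
Definition unemb (p : Dt) : 'I_n * 'I_k := tagged p.

Lemma embK : cancel emb unemb. Proof. by []. Qed.
Lemma unembK : cancel unemb emb. Proof. by case=> [[] x]. Qed.
Lemma emb_bij : bijective emb. Proof. exact: (Bijective embK unembK). Qed.

Lemma sum_Dt (F : Dt -> C) : \sum_p F p = \sum_i \sum_r F (emb (i, r)).
Proof.
rewrite (reindex emb); last by exists unemb => x _; [exact: embK | exact: unembK].
by rewrite pair_bigA; apply: eq_bigr => -[i r].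
Qed.

Lemma eq_emb x y : (emb x == emb y) = (x == y).
Proof. by apply: inj_eq; exact: can_inj embK. Qed.

Definition b i r := opapply (v i) (u r).
Definition bp (p : Dt) := b (unemb p).1 (unemb p).2.
Definition Ud : op R Dt H := fun p h => Num.conj (bp p h).

Lemma eu r : opapply e (u r) = u r.
Proof. by apply: e_fix; case: su => Su _; apply: Su. Qed.

Lemma dot_b i r j s : dot (b i r) (b j s) = (i == j)%:R * (r == s)%:R.
Proof.
rewrite /b dot_adj -opapply_comp F1 opapply_scale dot_scaler eu ou.
by [].
Qed.

Lemma Ud_unitary : Defs.is_unitary Ud.
Proof.
split.
  rewrite -Q_id; apply: op_ext => x; rewrite opapply_comp /Q opapply_sum.
  apply: functional_extensionality => h.
  have -> : opapply Ud x = fun p => dot (bp p) x by [].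
  rewrite {1}/opapply /opadj /Ud sum_Dt; apply: eq_bigr => i _.
  rewrite opapply_comp -{1}ve opapply_comp opapply_proj opapply_lc /lc.
  apply: eq_bigr => r _; rewrite conjCK /bp embK /= mulrC; congr (_ * _).
  by rewrite /b dot_adj.
apply: functional_extensionality => p; apply: functional_extensionality => q.
rewrite /opcomp /Ud /opadj /idop.
transitivity (dot (bp p) (bp q)).
  by rewrite /dot; apply: eq_bigr => h _; rewrite conjCK.
rewrite -(unembK p) -(unembK q) eq_emb /bp !embK.
case: (unemb p) => i r; case: (unemb q) => j s /=.
by rewrite dot_b xpair_eqE; case: (i == j); case: (r == s); rewrite /= ?mulr1 ?mulr0.
Qed.


Lemma UMU (M : op R H H) p q :
  opcomp Ud (opcomp M (opadj Ud)) p q = dot (bp p) (opapply M (bp q)).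
Proof.
rewrite /opcomp /dot /Ud /opadj /opapply; apply: eq_bigr => h _; congr (_ * _).
by apply: eq_bigr => h' _; rewrite conjCK.
Qed.

Lemma vb i j s : opapply (opadj (v i)) (b j s) = fun t => (i == j)%:R * u s t.
Proof. by rewrite /b -opapply_comp F1 opapply_scale eu. Qed.

Lemma dot_bab a i r j s : A a ->
  dot (b i r) (opapply a (b j s)) =
  dot xi (opapply (opcomp (opadj (aa i)) (opcomp a (aa j))) xi) * (r == s)%:R.
Proof.
move=> Aa; rewrite {1}/b dot_adj /b -!opapply_comp opcompA.
have -> : opcomp (opadj (v i)) (opcomp a (v j)) =
   opcomp e (opcomp (opcomp (opadj (aa i)) (opcomp a (aa j))) e).
  by rewrite /v opadj_comp e_adj !opcompA.
rewrite lam_e; last by apply: A_comp; [apply: Aadj | apply: A_comp].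
by rewrite opapply_scale dot_scaler eu ou.
Qed.

Definition untagR (z : {i : unit & TR i}) : 'I_k := tagged z.
Lemma eq_TagR (r s : 'I_k) : (existT TR tt r == existT TR tt s) = (r == s).
Proof.
apply: (inj_eq (f := fun r => existT TR tt r)).
by apply: (can_inj (g := untagR)).
Qed.


Lemma Ud_rep : rep_unitary A Ud.
Proof.
split; first exact: Ud_unitary.
move=> M; split.
  move=> [a [Aa ->]].
  exists (fun p1 p2 : {i : unit & TL i} =>
            dot (b (tagged p1) r0) (opapply a (b (tagged p2) r0))).
  apply: functional_extensionality => p; apply: functional_extensionality => q.
  rewrite UMU -(unembK p) -(unembK q).
  case: (unemb p) => i r; case: (unemb q) => j s.
  rewrite /bp !embK /blockop /= !dot_bab // eqxx mulr1.
  by rewrite eq_TagR.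
move=> [X ->].
pose Xc (i j : 'I_n) := X (existT TL tt i) (existT TL tt j).
pose a := opsum (fun i => opsum (fun j => opscale (Xc i j) (opcomp (v i) (opadj (v j))))).
exists a; split.
  apply: A_sum => i; apply: A_sum => j; apply: A_scale; apply: A_comp; first exact: Av.
  by apply: Aadj; exact: Av.
have aE : forall j s, opapply a (b j s) = lc (fun i => Xc i j) (fun i => b i s).
  move=> j s; rewrite /a opapply_sum; apply: functional_extensionality => t.
  rewrite /lc; apply: eq_bigr => i _; rewrite opapply_sum (bigD1 j) //= big1 ?addr0.
    by rewrite opapply_scale opapply_comp vb eqxx opapply_scalev mul1r.
  move=> l nl; rewrite opapply_scale opapply_comp vb (negPf nl) opapply_scalev.
  by rewrite mul0r mulr0.
apply: functional_extensionality => p; apply: functional_extensionality => q.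
rewrite UMU -(unembK p) -(unembK q).
case: (unemb p) => i r; case: (unemb q) => j s.
rewrite /bp !embK /blockop /= aE dot_lcr (bigD1 i) //= dot_b eqxx mul1r big1 ?addr0.
  by rewrite eq_TagR.
by move=> l nl; rewrite dot_b eq_sym (negPf nl) mul0r mulr0.
Qed.

End Basis.

End MinS.

Theorem factor_structure (h0 : H) :
  exists n k (U : op R (dsum (fun _ : unit => ('I_n : finType)) (fun _ : unit => ('I_k : finType))) H),
    rep_unitary A U.
Proof.
have [S [k [u mS]]] := min_inv h0.
have [n [w [ow sw]]] := onb_exists (sAxi mS).
have : forall i, exists a, A a /\ w i = opapply a (xi mS) by move=> i; apply: (proj1 sw).
move=> /fin_all_exists [aa haa].
exists n, k, (Ud u aa).
apply: (Ud_rep (mS := mS) (w := w)) => //; by move=> i; case: (haa i).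
Qed.
End Factor.

Section Coord.
Variable R : realType.
Local Notation C := (C R).
Variables (n k : nat) (H : finType) (U : op R (Dt k n) H).
Hypothesis Uu : Defs.is_unitary U.

Definition beta (p : Dt k n) : vec R H := opapply (opadj U) (std p).

Lemma adjU_apply (c : vec R (Dt k n)) : opapply (opadj U) c = lc c beta.
Proof.
apply: functional_extensionality => h; rewrite /opapply /lc; apply: eq_bigr => p _.
by rewrite mulrC; congr (_ * _); rewrite /beta opapply_std.
Qed.

Lemma U_apply x : opapply U x = fun p => dot (beta p) x.
Proof.
apply: functional_extensionality => p; rewrite /opapply /dot; apply: eq_bigr => h _.
by rewrite /beta opapply_std /opadj conjCK.
Qed.

Lemma U_beta p : opapply U (beta p) = std p.
Proof. by rewrite /beta -opapply_comp (proj2 Uu) opapply_id. Qed.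

Lemma beta_on : orthon beta.
Proof.
move=> p q; rewrite -[beta q]/(opapply (opadj U) (std q)) -dot_adj.
by rewrite U_beta /dot (bigD1 p) //= /std eqxx big1 ?addr0 ?conjC1 ?mul1r // => s /negPf ->;
   rewrite conjC0 mul0r.
Qed.

Lemma beta_span x : x = lc (fun p => dot (beta p) x) beta.
Proof. by rewrite -adjU_apply -U_apply -opapply_comp (proj1 Uu) opapply_id. Qed.

Lemma conj_apply (N : op R (Dt k n) (Dt k n)) q :
  opapply (opcomp (opadj U) (opcomp N U)) (beta q) = lc (fun p => N p q) beta.
Proof. by rewrite !opapply_comp U_beta opapply_std adjU_apply. Qed.

Definition lift2 (M : op R ('I_n * 'I_k)%type ('I_n * 'I_k)%type) : op R (Dt k n) (Dt k n) :=
  fun p q => M (unemb p) (unemb q).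

Lemma lift2_comp M N : opcomp (lift2 M) (lift2 N) = lift2 (opcomp M N).
Proof.
apply: functional_extensionality => p; apply: functional_extensionality => q.
rewrite /opcomp /lift2 sum_Dt pair_bigA; apply: eq_bigr => -[i r] _.
by rewrite embK.
Qed.

Definition mL (X : op R 'I_n 'I_n) : op R ('I_n * 'I_k)%type ('I_n * 'I_k)%type :=
  fun a b => X a.1 b.1 * (a.2 == b.2)%:R.
Definition mR (Y : op R 'I_k 'I_k) : op R ('I_n * 'I_k)%type ('I_n * 'I_k)%type :=
  fun a b => (a.1 == b.1)%:R * Y a.2 b.2.

Lemma mLR X Y : opcomp (mL X) (mR Y) = opcomp (mR Y) (mL X).
Proof.
apply: functional_extensionality => a; apply: functional_extensionality => b.
have pr : forall F : ('I_n * 'I_k)%type -> C, \sum_c F c = \sum_i \sum_j F (i, j).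
  by move=> F; rewrite pair_bigA; apply: eq_bigr => -[].
rewrite /opcomp /mL /mR !pr /=.
rewrite (bigD1 b.1) //= [X in _ + X = _]big1 ?addr0; last first.
  by move=> i ni; apply: big1 => j _; rewrite (negPf ni) /= !(mul0r, mulr0).
rewrite (bigD1 a.2) //= [X in _ + X = _]big1 ?addr0; last first.
  by move=> j nj; rewrite eq_sym (negPf nj) /= !(mul0r, mulr0).
rewrite [RHS](bigD1 a.1) //= [X in _ = _ + X]big1 ?addr0; last first.
  by move=> i ni; apply: big1 => j _; rewrite eq_sym (negPf ni) /= !(mul0r, mulr0).
rewrite [RHS](bigD1 b.2) //= [X in _ = _ + X]big1 ?addr0; last first.
  by move=> j nj; rewrite (negPf nj) /= !(mul0r, mulr0).
by rewrite !eqxx; ring.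
Qed.

Definition eTL (i : 'I_n) : {x : unit & TL n x} := existT (TL n) tt i.
Definition untagL (z : {i : unit & TL n i}) : 'I_n := tagged z.
Lemma eq_TagL (r s : 'I_n) : (existT (TL n) tt r == existT (TL n) tt s) = (r == s).
Proof.
apply: (inj_eq (f := fun r => existT (TL n) tt r)).
by apply: (can_inj (g := untagL)).
Qed.

Lemma blockop_lift (X : op R {i : unit & TL n i} {i : unit & TL n i}) :
  blockop X = lift2 (mL (fun i j => X (eTL i) (eTL j))).
Proof.
apply: functional_extensionality => p; apply: functional_extensionality => q.
rewrite /blockop /lift2 /mL -(unembK p) -(unembK q).
case: (unemb p) => i r; case: (unemb q) => j s.
by rewrite !embK /= eq_TagR.
Qed.

End Coord.

Section Tens.
Variable R : realType.
Lemma optens_comp (T1 T2 S1 S2 V1 V2 : finType) (A : op R T1 S1) (B : op R T2 S2)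
   (A' : op R S1 V1) (B' : op R S2 V2) :
  opcomp (optens A B) (optens A' B') = optens (opcomp A A') (opcomp B B').
Proof.
apply: functional_extensionality => i; apply: functional_extensionality => j.
rewrite /opcomp /optens big_distrlr /= pair_bigA; apply: eq_bigr => -[a b] _ /=.
by rewrite mulrACA.
Qed.

Lemma optens_adj (T1 T2 S1 S2 : finType) (A : op R T1 S1) (B : op R T2 S2) :
  opadj (optens A B) = optens (opadj A) (opadj B).
Proof.
apply: functional_extensionality => i; apply: functional_extensionality => j.
by rewrite /opadj /optens rmorphM.
Qed.

Lemma stlocL_adj (H HL HR : finType) (chi : op R (HL * HR)%type H) a At :
  opcomp a (opadj chi) = opcomp (opadj chi) (optens At (@idop R HR)) ->
  opcomp chi (opadj a) = opcomp (optens (opadj At) (@idop R HR)) chi.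
Proof.
move=> h; have := congr1 (@opadj R _ _) h.
by rewrite !opadj_comp opadjK optens_adj opadj_id.
Qed.

Lemma stlocR_adj (H HL HR : finType) (chi : op R (HL * HR)%type H) a At :
  opcomp a (opadj chi) = opcomp (opadj chi) (optens (@idop R HL) At) ->
  opcomp chi (opadj a) = opcomp (optens (@idop R HL) (opadj At)) chi.
Proof.
move=> h; have := congr1 (@opadj R _ _) h.
by rewrite !opadj_comp opadjK optens_adj opadj_id.
Qed.

Lemma lift2_adj (n k : nat) (M : op R ('I_n * 'I_k)%type ('I_n * 'I_k)%type) :
  opadj (lift2 M) = lift2 (opadj M).
Proof. by []. Qed.

Lemma sum_pair (T1 T2 : finType) (F : (T1 * T2)%type -> Defs.C R) :
  \sum_p F p = \sum_a \sum_b F (a, b).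
Proof. by rewrite pair_bigA; apply: eq_bigr => -[]. Qed.

Definition vtens (T1 T2 : finType) (x : vec R T1) (y : vec R T2) : vec R (T1 * T2)%type :=
  fun lr => x lr.1 * y lr.2.

Lemma optens_vtens (T1 T2 S1 S2 : finType) (E : op R T1 S1) (F : op R T2 S2) x y :
  opapply (optens E F) (vtens x y) = vtens (opapply E x) (opapply F y).
Proof.
apply: functional_extensionality => -[l r].
rewrite /opapply /optens /vtens big_distrlr /= pair_bigA; apply: eq_bigr => -[a b] _ /=.
by rewrite mulrACA.
Qed.

Lemma dot_vtens (T1 T2 : finType) (x x' : vec R T1) (y y' : vec R T2) :
  dot (vtens x y) (vtens x' y') = dot x x' * dot y y'.
Proof.
rewrite /dot /vtens big_distrlr /= pair_bigA; apply: eq_bigr => -[a b] _ /=.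
by rewrite rmorphM /= mulrACA.
Qed.

Lemma optens_idr_apply (T1 T2 S1 : finType) (G : op R T1 S1) (y : vec R (S1 * T2)%type) l r :
  opapply (optens G (@idop R T2)) y (l, r) = \sum_l' G l l' * y (l', r).
Proof.
rewrite /opapply /optens sum_pair /=.
apply: eq_bigr => a _; rewrite (bigD1 r) //= big1 ?addr0.
  by rewrite /idop eqxx mulr1.
by move=> b nb; rewrite /idop eq_sym (negPf nb) mulr0 mul0r.
Qed.

Lemma optens_idl_apply (T1 T2 S2 : finType) (G : op R T2 S2) (y : vec R (T1 * S2)%type) l r :
  opapply (optens (@idop R T1) G) y (l, r) = \sum_r' G r r' * y (l, r').
Proof.
rewrite /opapply /optens sum_pair /=.
rewrite (bigD1 l) //= [X in _ + X]big1 ?addr0.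
  by apply: eq_bigr => b _; rewrite /idop eqxx mul1r.
move=> a na; apply: big1 => b _.
by rewrite /idop eq_sym (negPf na) !mul0r.
Qed.

End Tens.

Section SumTag.
Variable R : realType.
Definition eTR (k : nat) (r : 'I_k) : {x : unit & TR k x} := existT (TR k) tt r.

Lemma sum_TL (n : nat) (F : {x : unit & TL n x} -> Defs.C R) :
  \sum_a F a = \sum_i F (eTL i).
Proof.
rewrite (reindex (@eTL n)) //.
by exists (@untagL n) => [x _ | [[] x] _].
Qed.

Lemma sum_TR (k : nat) (F : {x : unit & TR k x} -> Defs.C R) :
  \sum_a F a = \sum_i F (eTR i).
Proof.
rewrite (reindex (@eTR k)) //.
by exists (@untagR k) => [x _ | [[] x] _].
Qed.
End SumTag.

Lemma eq_pairTL (n p : nat) (i j : 'I_n) (s s' : 'I_p) :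
  ((eTL i, s) == (eTL j, s')) = (i == j) && (s == s').
Proof. by rewrite xpair_eqE eq_TagL. Qed.

Lemma eq_pairTR (k q : nat) (t t' : 'I_q) (r r' : 'I_k) :
  ((t, eTR r) == (t', eTR r')) = (t == t') && (r == r').
Proof. by rewrite xpair_eqE eq_TagR. Qed.

Lemma iota_apply (R : realType) (HL HML HMR HR : finType) (ph : vec R (HML * HMR)%type)
  (z : vec R (HL * HR)%type) a s t b :
  opapply (iota_phi (HL := HL) (HR := HR) ph) z ((a, s), (t, b)) = ph (s, t) * z (a, b).
Proof.
rewrite /opapply /iota_phi sum_pair /= (bigD1 a) //= [X in _ + X]big1 ?addr0; last first.
  move=> a' na; apply: big1 => b' _; rewrite eq_sym (negPf na); by rewrite !mul0r.
rewrite (bigD1 b) //= [X in _ + X]big1 ?addr0; last first.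
  by move=> b' nb; rewrite eq_sym (negPf nb) mulr0 mul0r.
by rewrite !eqxx mul1r mulr1.
Qed.

Section Main.
Variable R : realType.
Local Notation C := (C R).
Variables (H HLc HRc : finType) (chi : op R (HLc * HRc)%type H).
Hypothesis chiB : balanced chi.
Hypothesis chiF : is_factor (stlocL chi).
Local Notation A := (stlocL chi).
Let Aadj : forall a, A a -> A (opadj a). Proof. by case: chiF => [[]]. Qed.
Let Abic : forall a, A a <-> commutant (commutant A) a. Proof. by case: chiF => [[]]. Qed.

Variables (n k : nat) (U : op R (Dt k n) H).
Hypothesis Urep : rep_unitary A U.
Let Uu : Defs.is_unitary U. Proof. by case: Urep. Qed.
Variables (i0 : 'I_n) (r0 : 'I_k).

Definition Eop (i j : 'I_n) : op R H H :=
  opcomp (opadj U) (opcomp (lift2 (mL (fun a b => ((a == i) && (b == j))%:R))) U).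
Definition Yop (r s : 'I_k) : op R H H :=
  opcomp (opadj U) (opcomp (lift2 (mR (fun a b => ((a == r) && (b == s))%:R))) U).
Definition bet (i : 'I_n) (r : 'I_k) := beta U (emb (i, r)).

Lemma UaU a : opcomp (opadj U) (opcomp (opcomp U (opcomp a (opadj U))) U) = a.
Proof.
rewrite (opcompA U) -(opcompA (opadj U) U) (proj1 Uu) opcomp1l.
by rewrite opcompA (proj1 Uu) opcomp1r.
Qed.

Lemma Eop_in_A i j : A (Eop i j).
Proof.
pose X := (fun p1 p2 : {x : unit & TL n x} =>
       ((untagL p1 == i) && (untagL p2 == j))%:R : C).
have [a [Aa ha]] := proj2 (proj2 Urep (blockop X)) (ex_intro _ X erefl).
have -> : Eop i j = opcomp (opadj U) (opcomp (blockop X) U) by rewrite blockop_lift.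
by rewrite ha UaU.
Qed.

Lemma Yop_comm r s : commutant A (Yop r s).
Proof.
move=> a Aa.
have [X hX] := proj1 (proj2 Urep (opcomp U (opcomp a (opadj U)))) (ex_intro _ a (conj Aa erefl)).
rewrite -(UaU a) hX blockop_lift /Yop.
have UU : forall (M N : op R (Dt k n) (Dt k n)),
    opcomp (opcomp (opadj U) (opcomp M U)) (opcomp (opadj U) (opcomp N U)) =
    opcomp (opadj U) (opcomp (opcomp M N) U).
  move=> M N; apply: op_ext => x; rewrite !opapply_comp.
  by rewrite -(opapply_comp U (opadj U)) (proj2 Uu) opapply_id.
by rewrite !UU !lift2_comp mLR.
Qed.

Lemma sum_lc (F : Dt k n -> C) (t : H) :
  lc F (beta U) t = \sum_i \sum_r F (emb (i, r)) * bet i r t.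
Proof. by rewrite /lc sum_Dt. Qed.

Lemma Eop_apply i j i' r : opapply (Eop i j) (bet i' r) = fun t => (j == i')%:R * bet i r t.
Proof.
rewrite /Eop /bet conj_apply //; apply: functional_extensionality => t.
rewrite sum_lc (bigD1 i) //= [X in _ + X]big1 ?addr0; last first.
  move=> a na; apply: big1 => s _.
  by rewrite /lift2 /mL !embK /= (negPf na) /= !mul0r.
rewrite (bigD1 r) //= [X in _ + X]big1 ?addr0; last first.
  by move=> s ns; rewrite /lift2 /mL !embK /= eq_sym (negPf ns) !mulr0 mul0r.
by rewrite /lift2 /mL !embK /= !eqxx /= eq_sym mulr1.
Qed.

Lemma Yop_apply r s i r' : opapply (Yop r s) (bet i r') = fun t => (s == r')%:R * bet i r t.
Proof.
rewrite /Yop /bet conj_apply //; apply: functional_extensionality => t.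
rewrite sum_lc (bigD1 i) //= [X in _ + X]big1 ?addr0; last first.
  move=> a na; apply: big1 => s' _.
  by rewrite /lift2 /mR !embK /= (negPf na) /= !mul0r.
rewrite (bigD1 r) //= [X in _ + X]big1 ?addr0; last first.
  by move=> s' ns; rewrite /lift2 /mR !embK /= (negPf ns) !mulr0 mul0r.
by rewrite /lift2 /mR !embK /= !eqxx /= eq_sym mul1r.
Qed.

Lemma Eop_adj i j : opadj (Eop i j) = Eop j i.
Proof.
rewrite /Eop !opadj_comp opadjK lift2_adj opcompA; congr (opcomp _ (opcomp (lift2 _) _)).
apply: functional_extensionality => a; apply: functional_extensionality => b.
rewrite /opadj /mL rmorphM /= !conjC_nat; congr (_ * _); congr (_ %:R).
  by rewrite eq_sym andbC.
by rewrite eq_sym.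
Qed.


Variables (Et : 'I_n -> op R HLc HLc) (Ft : 'I_k -> op R HRc HRc).
Hypothesis hE : forall i,
  opcomp (Eop i i0) (opadj chi) = opcomp (opadj chi) (optens (Et i) (@idop R HRc)) /\
  opcomp chi (Eop i i0) = opcomp (optens (Et i) (@idop R HRc)) chi.
Hypothesis hF : forall r,
  opcomp (Yop r r0) (opadj chi) = opcomp (opadj chi) (optens (@idop R HLc) (Ft r)) /\
  opcomp chi (Yop r r0) = opcomp (optens (@idop R HLc) (Ft r)) chi.

Definition psi := opapply chi (bet i0 r0).

Lemma chi_E i x : opapply chi (opapply (Eop i i0) x) =
  opapply (optens (Et i) (@idop R HRc)) (opapply chi x).
Proof. by rewrite -!opapply_comp (proj2 (hE i)). Qed.
Lemma chi_Ea i x : opapply chi (opapply (Eop i0 i) x) =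
  opapply (optens (opadj (Et i)) (@idop R HRc)) (opapply chi x).
Proof. by rewrite -Eop_adj -!opapply_comp (stlocL_adj (proj1 (hE i))). Qed.
Lemma chi_Y r x : opapply chi (opapply (Yop r r0) x) =
  opapply (optens (@idop R HLc) (Ft r)) (opapply chi x).
Proof. by rewrite -!opapply_comp (proj2 (hF r)). Qed.

Lemma Yop_adj r s : opadj (Yop r s) = Yop s r.
Proof.
rewrite /Yop !opadj_comp opadjK lift2_adj opcompA; congr (opcomp _ (opcomp (lift2 _) _)).
apply: functional_extensionality => a; apply: functional_extensionality => b.
rewrite /opadj /mR rmorphM /= !conjC_nat; congr (_ * _); congr (_ %:R).
  by rewrite eq_sym.
by rewrite eq_sym andbC.
Qed.

Lemma chi_Ya r x : opapply chi (opapply (Yop r0 r) x) =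
  opapply (optens (@idop R HLc) (opadj (Ft r))) (opapply chi x).
Proof. by rewrite -Yop_adj -!opapply_comp (stlocR_adj (proj1 (hF r))). Qed.

Lemma scal1 (T : finType) (x : vec R T) : (fun t => 1%:R * x t) = x.
Proof. by apply: functional_extensionality => t; rewrite mul1r. Qed.

Lemma psi_ir i r : opapply chi (bet i r) = opapply (optens (Et i) (Ft r)) psi.
Proof.
have -> : bet i r = opapply (Eop i i0) (opapply (Yop r r0) (bet i0 r0)).
  by rewrite Yop_apply eqxx scal1 Eop_apply eqxx scal1.
rewrite chi_E chi_Y -opapply_comp optens_comp opcomp1l opcomp1r.
by [].
Qed.

Lemma psiL i j : opapply (optens (opcomp (opadj (Et i)) (Et j)) (@idop R HRc)) psi =
  fun t => (i == j)%:R * psi t.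
Proof.
rewrite -[@idop R HRc]opcomp1l -optens_comp opapply_comp.
rewrite /psi -chi_E Eop_apply eqxx scal1 -chi_Ea Eop_apply.
by rewrite opapply_scalev.
Qed.

Lemma psiR r s : opapply (optens (@idop R HLc) (opcomp (opadj (Ft r)) (Ft s))) psi =
  fun t => (r == s)%:R * psi t.
Proof.
rewrite -[@idop R HLc]opcomp1l -optens_comp opapply_comp.
rewrite /psi -chi_Y Yop_apply eqxx scal1 -chi_Ya Yop_apply.
by rewrite opapply_scalev.
Qed.


Definition SL := fun x : vec R HLc => exists bb : vec R HRc, x = fun l => \sum_r bb r * psi (l, r).
Definition SR := fun y : vec R HRc => exists aa : vec R HLc, y = fun r => \sum_l aa l * psi (l, r).

Lemma sSL : subspace SL.
Proof.
split; [|split].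
- exists (fun _ => 0); apply: functional_extensionality => l.
  by rewrite big1 // => r _; rewrite mul0r.
- move=> x y [b1 ->] [b2 ->]; exists (fun r => b1 r + b2 r).
  apply: functional_extensionality => l; rewrite -big_split.
  by apply: eq_bigr => r _; rewrite mulrDl.
- move=> c x [b1 ->]; exists (fun r => c * b1 r).
  apply: functional_extensionality => l; rewrite mulr_sumr.
  by apply: eq_bigr => r _; rewrite mulrA.
Qed.

Lemma sSR : subspace SR.
Proof.
split; [|split].
- exists (fun _ => 0); apply: functional_extensionality => l.
  by rewrite big1 // => r _; rewrite mul0r.
- move=> x y [b1 ->] [b2 ->]; exists (fun r => b1 r + b2 r).
  apply: functional_extensionality => l; rewrite -big_split.
  by apply: eq_bigr => r _; rewrite mulrDl.
- move=> c x [b1 ->]; exists (fun r => c * b1 r).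
  apply: functional_extensionality => l; rewrite mulr_sumr.
  by apply: eq_bigr => r _; rewrite mulrA.
Qed.

Lemma SL_col r : SL (fun l => psi (l, r)).
Proof.
exists (std r); apply: functional_extensionality => l.
rewrite (bigD1 r) //= big1 ?addr0 /std ?eqxx ?mul1r // => r' nr.
by rewrite /std (negPf nr) mul0r.
Qed.

Lemma SL_G i j x : SL x ->
  opapply (opcomp (opadj (Et i)) (Et j)) x = fun l => (i == j)%:R * x l.
Proof.
move=> [bb ->]; apply: functional_extensionality => l.
rewrite opapply_sumv mulr_sumr; apply: eq_bigr => r _.
rewrite opapply_scalev -mulrCA; congr (_ * _).
have := congr1 (fun f => f (l, r)) (psiL i j).
by rewrite optens_idr_apply.
Qed.

Lemma SR_G r s y : SR y ->
  opapply (opcomp (opadj (Ft r)) (Ft s)) y = fun t => (r == s)%:R * y t.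
Proof.
move=> [aa ->]; apply: functional_extensionality => t.
rewrite opapply_sumv mulr_sumr; apply: eq_bigr => l _.
rewrite opapply_scalev -mulrCA; congr (_ * _).
have := congr1 (fun f => f (l, t)) (psiR r s).
by rewrite optens_idl_apply.
Qed.

Section ONB.
Variables (p q : nat) (m : 'I_p -> vec R HLc) (nn : 'I_q -> vec R HRc).
Hypotheses (om : orthon m) (sm : spans SL m) (on : orthon nn) (sn : spans SR nn).

Definition w2 (st : ('I_p * 'I_q)%type) := vtens (m st.1) (nn st.2).
Definition phi (st : ('I_p * 'I_q)%type) := dot (w2 st) psi.

Lemma w2_on : orthon w2.
Proof.
move=> [s t] [s' t']; rewrite /w2 dot_vtens /= om on xpair_eqE.
by case: (s == s'); case: (t == t'); rewrite /= ?mulr1 ?mulr0 ?mul0r.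
Qed.

Lemma psi_dec : psi = lc phi w2.
Proof.
apply: functional_extensionality => -[l r].
have := congr1 (fun f => f l) (proj2 sm _ (SL_col r)) => /= ->.
rewrite /lc sum_pair /=; apply: eq_bigr => s _.
set g := fun r => dot (m s) (fun l => psi (l, r)).
have Sg : SR g.
  exists (fun l => Num.conj (m s l)); apply: functional_extensionality => r'.
  by rewrite /g /dot.
change (dot (m s) (fun l => psi (l, r))) with (g r).
have := congr1 (fun f => f r) (proj2 sn _ Sg) => /= ->.
rewrite mulr_suml; apply: eq_bigr => t _.
rewrite /w2 /vtens /= [m s l * _]mulrC mulrA; congr (_ * _ * _).
rewrite /phi /dot /g sum_pair /= exchange_big /=; apply: eq_bigr => r' _.
rewrite mulr_sumr; apply: eq_bigr => l' _.
by rewrite rmorphM /= mulrA [Num.conj (m s l') * _]mulrC.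
Qed.


Definition UL : op R HLc ({x : unit & TL n x} * 'I_p)%type :=
  fun l xs => opapply (Et (untagL xs.1)) (m xs.2) l.
Definition UR : op R HRc ('I_q * {x : unit & TR k x})%type :=
  fun r ty => opapply (Ft (untagR ty.2)) (nn ty.1) r.

Lemma UL_iso : is_isometry UL.
Proof.
apply: functional_extensionality => -[[[] i] s]; apply: functional_extensionality => -[[[] j] s'].
rewrite /opcomp /opadj /UL /idop.
rewrite -[(_, s) == _]/((eTL i, s) == (eTL j, s')) eq_pairTL /=.
transitivity (dot (opapply (Et i) (m s)) (opapply (Et j) (m s'))); first by [].
rewrite dot_adj -opapply_comp SL_G; last by case: sm => Sm _; apply: Sm.
by rewrite dot_scaler om -natrM mulnb.
Qed.

Lemma UR_iso : is_isometry UR.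
Proof.
apply: functional_extensionality => -[t [[] r]]; apply: functional_extensionality => -[t' [[] r']].
rewrite /opcomp /opadj /UR /idop.
rewrite -[(t, _) == _]/((t, eTR r) == (t', eTR r')) eq_pairTR /=.
transitivity (dot (opapply (Ft r) (nn t)) (opapply (Ft r') (nn t'))); first by [].
rewrite dot_adj -opapply_comp SR_G; last by case: sn => Sn _; apply: Sn.
by rewrite dot_scaler on -natrM mulnb andbC.
Qed.


Hypothesis chiI : is_isometry chi.

Lemma phi_unit : unit_vector phi.
Proof.
rewrite /unit_vector -/(dot phi phi).
rewrite -(dot_coef (u := w2) (x := psi)); last exact: psi_dec.
rewrite /psi dot_adj -opapply_comp chiI opapply_id.
by rewrite /bet beta_on // eqxx.
Qed.

Lemma zeta_apply x i r :
  opapply (opcomp (dsum_incl R (TL := TL n) (TR := TR k)) U) x (eTL i, eTR r) =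
  dot (bet i r) x.
Proof.
rewrite opapply_comp U_apply // {1}/opapply /dsum_incl sum_Dt.
rewrite (bigD1 i) //= [X in _ + X]big1 ?addr0; last first.
  move=> i' ni; apply: big1 => r' _.
  rewrite -[(_, _) == _]/((eTL i, eTR r) == (eTL i', eTR r')) xpair_eqE eq_TagL.
  by rewrite eq_sym (negPf ni) mul0r.
rewrite (bigD1 r) //= [X in _ + X]big1 ?addr0; last first.
  move=> r' nr.
  rewrite -[(_, _) == _]/((eTL i, eTR r) == (eTL i, eTR r')) xpair_eqE eq_TagL eq_TagR.
  by rewrite eq_sym (negPf nr) andbF mul0r.
by rewrite -[(_, _) == _]/((eTL i, eTR r) == (eTL i, eTR r)) eqxx mul1r.
Qed.

Lemma final x :
  opapply chi x = opapply (optens UL UR)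
     (opapply (iota_phi phi) (opapply (opcomp (dsum_incl R (TL := TL n) (TR := TR k)) U) x)).
Proof.
apply: functional_extensionality => -[l r].
rewrite {1}(beta_span Uu x) opapply_lc /lc sum_Dt.
set W := opapply (iota_phi phi) _.
rewrite [in RHS]/opapply sum_pair sum_pair sum_TL.
apply: eq_bigr => i _.
rewrite -/(bet i _).
under eq_bigr => r' _ do rewrite psi_ir {1}psi_dec opapply_lc /lc sum_pair mulr_sumr.
rewrite exchange_big; apply: eq_bigr => s _.
rewrite sum_pair.
under eq_bigr => r' _ do rewrite mulr_sumr.
rewrite exchange_big; apply: eq_bigr => t _.
rewrite sum_TR; apply: eq_bigr => r' _.
rewrite /W iota_apply zeta_apply optens_vtens /vtens /optens /UL /UR /=.
ring.
Qed.

End ONB.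

End Main.

Theorem mainTheorem14 (R : realType) (H HLc HRc : finType)
  (chi : op R (HLc * HRc)%type H) :
  is_isometry chi -> balanced chi -> is_factor (stlocL chi) ->
  exists (I : finType) (TL TR : I -> finType)
         (zeta : op R ({i : I & TL i} * {i : I & TR i})%type H),
    canonical_splitting (stlocL chi) zeta /\
    exists (HML HMR : finType) (phi : vec R (HML * HMR)%type)
           (UL : op R HLc ({i : I & TL i} * HML)%type)
           (UR : op R HRc (HMR * {i : I & TR i})%type),
      unit_vector phi /\ is_isometry UL /\ is_isometry UR /\
      forall x : vec R H,
        opapply chi x = opapply (optens UL UR) (opapply (iota_phi phi) (opapply zeta x)).
Proof.
move=> chiI chiB chiF.
have Aadj : forall a, stlocL chi a -> stlocL chi (opadj a) by case: chiF => [[]].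
have Abic : forall a, stlocL chi a <-> commutant (commutant (stlocL chi)) a
  by case: chiF => [[]].
have Acent := proj2 chiF.
case: (pickP (fun _ : H => true)) => [h0 _ | H0].
  have [n [k [U Urep]]] := factor_structure Aadj Abic Acent h0.
  have Uu : Defs.is_unitary U by case: Urep.
  have [p0 _] : exists p0 : Dt k n, True.
    case: (pickP (fun _ : Dt k n => true)) => [p0 _|D0]; first by exists p0.
    have := congr1 (fun M => M h0 h0) (proj1 Uu); rewrite /opcomp /idop eqxx big_pred0 //.
    by move/eqP; rewrite eq_sym oner_eq0.
  pose i0 := (unemb p0).1; pose r0 := (unemb p0).2.
  have : forall i, exists Et : op R HLc HLc,
     opcomp (Eop U i i0) (opadj chi) = opcomp (opadj chi) (optens Et (@idop R HRc)) /\
     opcomp chi (Eop U i i0) = opcomp (optens Et (@idop R HRc)) chi.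
    by move=> i; exact: (Eop_in_A Urep i i0).
  move=> /fin_all_exists [Et hE].
  have : forall r, exists Ft : op R HRc HRc,
     opcomp (Yop U r r0) (opadj chi) = opcomp (opadj chi) (optens (@idop R HLc) Ft) /\
     opcomp chi (Yop U r r0) = opcomp (optens (@idop R HLc) Ft) chi.
    by move=> r; apply/chiB; exact: (Yop_comm Urep r r0).
  move=> /fin_all_exists [Ft hF].
  have [p [m [om sm]]] := onb_exists (sSL chi U i0 r0).
  have [q [nn [on sn]]] := onb_exists (sSR chi U i0 r0).
  exists (unit : finType), (TL n), (TR k), (opcomp (dsum_incl R (TL := TL n) (TR := TR k)) U).
  split; first by exists U.
  exists ('I_p : finType), ('I_q : finType), (phi chi U i0 r0 m nn), (UL Et m), (UR Ft nn).
  split; first exact: (phi_unit Urep sm sn chiI).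
  split; first exact: (UL_iso Urep hE om sm).
  split; first exact: (UR_iso Urep hF on sn).
  exact: (final Urep hE hF sm sn).
have nH : forall h : H, False by move=> h; have := H0 h.
pose T0 := fun _ : unit => ('I_0 : finType).
have nD : forall p : dsum T0 T0, False by case=> [[] [[i hi] _]].
have nL : forall p : {i : unit & T0 i}, False by case=> [[] [i hi]].
pose U : op R (dsum T0 T0) H := fun _ _ => 0.
have opD : forall (M N : op R (dsum T0 T0) (dsum T0 T0)), M = N.
  by move=> M N; apply: functional_extensionality => p; case: (nD p).
exists (unit : finType), T0, T0, (opcomp (dsum_incl R (TL := T0) (TR := T0)) U).
split.
  exists U; split=> //; split.
    split; last exact: opD.
    by apply: functional_extensionality => h; case: (nH h).
  move=> M; split=> _.
    by exists (fun _ _ => 0); apply: opD.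
  by exists (@idop R H); split; [exact: A_id Abic | apply: opD].
exists ('I_1 : finType), ('I_1 : finType), (fun _ => 1).
exists (fun _ _ => 0), (fun _ _ => 0).
split.
  by rewrite /unit_vector sum_pair !big_ord1 /= conjC1 mulr1.
split.
  by apply: functional_extensionality => -[a s]; case: (nL a).
split.
  by apply: functional_extensionality => -[s a]; case: (nL a).
move=> x; apply: functional_extensionality => lr.
rewrite {1}/opapply big1; last by move=> h; case: (nH h).
by rewrite /opapply big1 // => P _; rewrite /optens !mul0r.
Qed.
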